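(* Let $r,K,\mu$ satisfy Assumption 1 (in particular $\mu<1-K$). Then $$m^*\le\frac{\frac{\mu K}{r}(1-\mu)}{1-\mu-K\left(1-\frac{2\mu}{r}\right)}.$$
   Context: Assumption 1: $r\in(1,\infty)$, $\mu\in\left(0,\min\left(\frac r2,1-\frac1r,1-K,K\right)\right)$, $K\in\left(0,\min\left(1,\frac{r}{r-1}\left(1-\frac{\mu}{1-\mu}\right)\right)\right)$. $f_w(w,m):=w(1-(w+m))+\mu(m-w)$, $f_m(w,m):=rm\left(1-\frac{w+m}{K}\right)+\mu(w-m)$; $(w^*,m^* )$ is the unique solution in $(0,1)\times(0,K)$ of $f_w=f_m=0$. *)

(* Defs.v *)
From Stdlib Require Import Reals Lra.
Open Scope R_scope.

Definition assumption1 (r mu K : R) : Prop :=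
  1 < r /\
  0 < mu /\ mu < r / 2 /\ mu < 1 - 1 / r /\ mu < 1 - K /\ mu < K /\
  0 < K /\ K < 1 /\ K < r / (r - 1) * (1 - mu / (1 - mu)).

Definition f_w (mu w m : R) : R := w * (1 - (w + m)) + mu * (m - w).
Definition f_m (r mu K w m : R) : R := r * m * (1 - (w + m) / K) + mu * (w - m).

Definition is_equilibrium (r mu K w m : R) : Prop :=
  0 < w /\ w < 1 /\ 0 < m /\ m < K /\ f_w mu w m = 0 /\ f_m r mu K w m = 0.

(* Main.v *)
Require Import Defs.
From Stdlib Require Import Reals Lra Psatz.
Open Scope R_scope.

Lemma lemG : forall r mu K t, 0 < mu -> mu < 1-K -> mu < K -> 0<K -> K<1 -> 0<t -> t<mu -> r*(1-mu) > 1 ->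
 r*(1-t-K)*(mu-t) = K*mu*t -> (2*mu-t)*(1-t-K) <= (1-t)*t.
intros.
assert (H8: (1-t-K)*(mu-t) < K*mu*t*(1-mu)).
{ assert (0 < (1-t-K)*(mu-t)) by (apply Rmult_lt_0_compat; lra). nra. }
assert (0 <= t*K*(1-2*mu+2*mu*mu)).
{ apply Rmult_le_pos; [nra|nra]. }
nra.
Qed.
Lemma lemF : forall r mu K t m, 0 < mu -> mu < 1-K -> mu < K -> 0<K -> K<1 -> 0<t -> t<mu -> 1 < r -> 0 < m ->
 r*(1-t-K)*(mu-t) = K*mu*t -> m*(2*mu-t) = (1-t)*(mu-t) -> (2*mu-t)*(1-t-K) <= (1-t)*t ->
 m*(r*(1-mu-K)+2*K*mu) <= mu*K*(1-mu).
intros r mu K t m ? ? ? ? ? ? ? ? ? Et Em Hg.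
assert (P: 0 <= (1-t)*r*(mu-t) - K*mu*(2*mu-t)).
{ assert (Q: 0 <= (1-t-K)*((1-t)*r*(mu-t) - K*mu*(2*mu-t))).
  { replace ((1-t-K)*((1-t)*r*(mu-t) - K*mu*(2*mu-t))) with ((1-t)*(r*(1-t-K)*(mu-t)) - K*mu*((2*mu-t)*(1-t-K))) by ring.
    rewrite Et. assert (0 <= K*mu) by nra. nra. }
  assert (0 < 1-t-K) by lra. nra. }
assert (L: (m*(2*mu-t))*(r*(1-mu-K)+2*K*mu) <= mu*K*(1-mu)*(2*mu-t)).
{ rewrite Em.
  replace ((1-t)*(mu-t)*(r*(1-mu-K)+2*K*mu)) with ((1-t)*(r*(1-t-K)*(mu-t) - r*(mu-t)*(mu-t) + 2*K*mu*(mu-t))) by ring.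
  rewrite Et. assert (0 <= (mu-t)*((1-t)*r*(mu-t) - K*mu*(2*mu-t))) by (apply Rmult_le_pos; lra). nra. }
assert (0 < 2*mu-t) by lra.
apply (Rmult_le_reg_r (2*mu-t)); [lra|]. nra.
Qed.
Lemma lemM : forall r mu K w m, 1 < r -> 0 < mu -> mu < 1-K -> mu < K -> 0<K -> K<1 -> 0<w -> w<1 -> 0<m -> m<K ->
 r*(1-mu) > 1 ->
 w * (1 - (w + m)) + mu * (m - w) = 0 -> r * m * (K - (w + m)) + K* mu * (w - m) = 0 ->
 m*(r*(1-mu-K)+2*K*mu) <= mu*K*(1-mu).
intros.
assert (Hs: w+m<1). { destruct (Rlt_or_le (w+m) 1); auto. exfalso. assert (w*(1-(w+m))<=0) by nra. assert (w-m<=0) by nra. assert (r*m*(K-(w+m))<0). { assert (r*m>0) by nra. nra. } nra. }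
assert (Hwm: m < w) by nra.
assert (HsK: K < w+m) by nra.
assert (Hs2: 1-mu < w+m) by nra.
set (t := 1 - (w+m)) in *.
assert (Et: r*(1-t-K)*(mu-t) = K*mu*t).
{ assert (E1: w*(mu-t) = mu*m) by (unfold t in *; nra).
  assert (E2: r*m*(1-t-K) = K*w*t).
  { unfold t in *. replace (r*m*(1-(1-(w+m))-K)) with (-(r * m * (K - (w + m)) + K* mu * (w - m)) + K*mu*(w-m)) by ring.
    replace (K*w*(1-(w+m))) with (K*(w * (1 - (w + m)) + mu * (m - w)) + K*mu*(w-m)) by ring.
    rewrite H10, H11. ring. }
  assert (HH: m*(r*(1-t-K)*(mu-t) - K*mu*t) = 0).
  { replace (m*(r*(1-t-K)*(mu-t) - K*mu*t)) with ((r*m*(1-t-K))*(mu-t) - K*t*(mu*m)) by ring.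
    rewrite E2, <- E1. ring. }
  apply Rmult_integral in HH. destruct HH; [lra|lra]. }
assert (Em: m*(2*mu-t) = (1-t)*(mu-t)). { assert (E1: w*(mu-t) = mu*m) by (unfold t in *; nra). assert (Hw: w = 1-t-m) by (unfold t; lra). rewrite Hw in E1. lra. }
assert (Ht0: 0 < t) by (unfold t; lra). assert (Ht1: t < mu) by (unfold t; lra).
clearbody t.
assert (Hg: (2*mu-t)*(1-t-K) <= (1-t)*t) by (apply (lemG r); lra).
apply (lemF r mu K t m); lra.
Qed.

Theorem mainTheorem20 (r mu K wstar mstar : R) :
  assumption1 r mu K ->
  is_equilibrium r mu K wstar mstar ->
  mstar <= (mu * K / r * (1 - mu)) / (1 - mu - K * (1 - 2 * mu / r)).
Proof.
  unfold assumption1, is_equilibrium, f_w, f_m.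
  intros (Hr & Hmu & Hmu2 & Hmu3 & Hmu4 & Hmu5 & HK & HK1 & _) (Hw & Hw1 & Hm & HmK & Ew & Em).
  assert (Hr1: r*(1-mu) > 1).
  { assert (1/r * r = 1) by (field; lra). nra. }
  assert (Em': r * mstar * (K - (wstar + mstar)) + K* mu * (wstar - mstar) = 0).
  { replace (r * mstar * (K - (wstar + mstar)) + K* mu * (wstar - mstar)) with
      (K * (r * mstar * (1 - (wstar + mstar) / K) + mu * (wstar - mstar))) by (field; lra).
    rewrite Em. ring. }
  pose proof (lemM r mu K wstar mstar Hr Hmu Hmu4 Hmu5 HK HK1 Hw Hw1 Hm HmK Hr1 Ew Em') as M.
  assert (HD: 1 - mu - K * (1 - 2 * mu / r) = (r*(1-mu-K)+2*K*mu)/r) by (field; lra).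
  assert (Hpos: 0 < r*(1-mu-K)+2*K*mu) by nra.
  rewrite HD.
  replace (mu * K / r * (1 - mu) / ((r * (1 - mu - K) + 2 * K * mu) / r)) with
    (mu * K * (1 - mu) / (r * (1 - mu - K) + 2 * K * mu)) by (field; lra).
  apply Rmult_le_reg_r with (r * (1 - mu - K) + 2 * K * mu); [lra|].
  replace (mu * K * (1 - mu) / (r * (1 - mu - K) + 2 * K * mu) * (r * (1 - mu - K) + 2 * K * mu)) with (mu * K * (1 - mu)) by (field; lra). lra.
Qed.
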